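(* Let $\ell>0$ and let $B\subset\mathbb R^d$ be a closed Euclidean ball of radius at least $3\ell d^2$ with $0\in\partial B$. Then there exists $z\in I$ such that $K_\ell(z)$ is contained in the interior of $B$.
   Context: $I:=\{z\in\mathbb Z^d:|z|_\infty=d\}$, where $|\cdot|_\infty$ is the sup norm; $K_\ell(z):=z\ell+[-\ell/2,\ell/2]^d$. *)

(* Defs.v *)
From mathcomp Require Import all_boot all_order all_algebra.
From mathcomp Require Import reals.
Set Implicit Arguments. Unset Strict Implicit. Unset Printing Implicit Defensive.
Import Order.TTheory GRing.Theory Num.Theory.
Local Open Scope ring_scope.

Section Defs.
Variables (R : realType) (d : nat).

Definition enorm (x : 'I_d -> R) : R := Num.sqrt (\sum_(i < d) x i ^+ 2).
Definition edist (x y : 'I_d -> R) : R := enorm (fun i => x i - y i).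

Definition cball (c : 'I_d -> R) (r : R) : ('I_d -> R) -> Prop :=
  fun x => edist x c <= r.

Definition einterior (A : ('I_d -> R) -> Prop) : ('I_d -> R) -> Prop :=
  fun x => exists2 e : R, 0 < e & forall y, edist y x < e -> A y.
Definition eboundary (A : ('I_d -> R) -> Prop) : ('I_d -> R) -> Prop :=
  fun x => forall e : R, 0 < e ->
    (exists2 y, A y & edist y x < e) /\ (exists2 y, ~ A y & edist y x < e).

Definition supnormZ (z : 'I_d -> int) : nat := (\max_(i < d) absz (z i))%N.

Definition Iset (z : 'I_d -> int) : Prop := supnormZ z = d.

Definition Kcube (l : R) (z : 'I_d -> int) : ('I_d -> R) -> Prop :=
  fun x => forall i, `|x i - (z i)%:~R * l| <= l / 2.

End Defs.

(* Main.v *)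
Require Import Defs.
From mathcomp Require Import all_boot all_order all_algebra.
From mathcomp Require Import reals.
From mathcomp Require Import ring lra.
Import Order.TTheory GRing.Theory Num.Theory.
Local Open Scope ring_scope.
Set Implicit Arguments. Unset Strict Implicit.

Section Aux.
Variables (R : realType) (d : nat).

Definition ss (u : 'I_d -> R) : R := \sum_(i < d) u i ^+ 2.

Lemma ss_ge0 u : 0 <= ss u.
Proof. by apply: sumr_ge0 => i _; rewrite sqr_ge0. Qed.

Lemma coord_le u i : u i ^+ 2 <= ss u.
Proof.
rewrite /ss (bigD1 i) //= lerDl; apply: sumr_ge0 => j _; exact: sqr_ge0.
Qed.

Lemma coord_abs u i (a : R) : 0 <= a -> ss u <= a ^+ 2 -> `|u i| <= a.
Proof.
move=> ha hs; have h := coord_le u i.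
rewrite ler_norml; apply/andP; split; nra.
Qed.

Lemma ssD p q : ss (fun i => p i + q i) = ss p + 2 * (\sum_(i < d) p i * q i) + ss q.
Proof.
rewrite /ss mulr_sumr -!big_split /=; apply: eq_bigr => i _; ring.
Qed.

Lemma ssN p : ss (fun i => - p i) = ss p.
Proof. by apply: eq_bigr => i _; rewrite sqrrN. Qed.

Lemma bnd u v (a b : R) : (forall i, `|u i| <= a) -> (forall i, `|v i| <= b) ->
  `|\sum_(i < d) u i * v i| <= d%:R * (a * b).
Proof.
move=> hu hv; apply: le_trans (ler_norm_sum _ _ _) _.
apply: (@le_trans _ _ (\sum_(i < d) a * b)).
  apply: ler_sum => i _; rewrite normrM.
  by apply: ler_pM; rewrite ?normr_ge0.
by rewrite sumr_const card_ord mulr_natl.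
Qed.

Lemma small_eps (del K : R) : 0 < del -> 0 <= K ->
  exists2 e : R, 0 < e & (e <= 1) /\ (e * (K + 1) <= del).
Proof.
move=> hd hK; have hK1 : 0 < K + 1 by lra.
exists (Num.min 1 (del / (K + 1))).
  by rewrite lt_min ltr01 divr_gt0.
split; first by rewrite ge_min lexx.
rewrite -ler_pdivlMr //; by rewrite ge_min lexx orbT.
Qed.

Lemma edist_lt x y (e : R) : 0 < e ->
  (edist x y < e) = (ss (fun i => x i - y i) < e ^+ 2).
Proof.
move=> he; rewrite /edist /enorm -{1}(gtr0_norm he) -sqrtr_sqr ltr_sqrt //.
by rewrite exprn_gt0.
Qed.

Lemma edist_le x y (e : R) : 0 <= e ->
  (edist x y <= e) = (ss (fun i => x i - y i) <= e ^+ 2).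
Proof.
move=> he; rewrite /edist /enorm -{1}(ger0_norm he) -sqrtr_sqr ler_sqrt //.
by rewrite sqr_ge0.
Qed.

Lemma ss_sub0 y : ss (fun i => y i - 0) = ss y.
Proof. by apply: eq_bigr => i _; rewrite subr0. Qed.

End Aux.

Theorem lemma9p2 (R : realType) (d : nat) (hd : (0 < d)%N) (l : R) (hl : 0 < l)
    (c : 'I_d -> R) (r : R) (hr : 3 * l * (d ^ 2)%:R <= r)
    (h0 : eboundary (cball c r) (fun _ => 0)) :
  exists z : 'I_d -> int, Iset z /\
    (forall x, Kcube l z x -> einterior (cball c r) x).
Proof.
set D : R := d%:R.
have D1 : 1 <= D by rewrite /D ler1n.
have hD2 : (d ^ 2)%:R = D ^+ 2 by rewrite natrX.
rewrite hD2 in hr.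
have rpos : 0 < r.
  have : 0 < 3 * l * D ^+ 2 by apply: mulr_gt0; [lra | rewrite exprn_gt0 //; lra].
  lra.
pose S := ss c.
have hS1 : S <= r ^+ 2.
  rewrite leNgt; apply/negP => hlt.
  have [e he [he1 heK]] := @small_eps R (S - r ^+ 2) (2 * D * r) (ltac:(lra)) (ltac:(nra)).
  have [[y hy hy0] _] := h0 e he.
  move: hy; rewrite /cball (edist_le _ _ (ltW rpos)) => hy.
  move: hy0; rewrite edist_lt // ss_sub0 => hy0.
  have E : S = ss (fun i => (c i - y i) + y i).
    by apply: eq_bigr => i _; rewrite subrK.
  rewrite ssD in E.
  have hcy : ss (fun i => c i - y i) <= r ^+ 2.
    rewrite -ssN /ss; under eq_bigr do rewrite opprB; exact: hy.
  have hb := @bnd R d (fun i => c i - y i) y r e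
     (fun i => coord_abs i (ltW rpos) hcy) (fun i => coord_abs i (ltW he) (ltW hy0)).
  have hb' := ler_norm (\sum_(i < d) (c i - y i) * y i).
  nra.
have hS2 : r ^+ 2 <= S.
  rewrite leNgt; apply/negP => hlt.
  have [e he [he1 heK]] := @small_eps R (r ^+ 2 - S) (2 * D * r) (ltac:(lra)) (ltac:(nra)).
  have [_ [y hy hy0]] := h0 e he.
  move: hy; rewrite /cball (edist_le _ _ (ltW rpos)) => hy.
  move/negP: hy; rewrite -ltNge => hy.
  move: hy0; rewrite edist_lt // ss_sub0 => hy0.
  rewrite (ssD y (fun i => - c i)) ssN in hy.
  have hc : ss (fun i => - c i) <= r ^+ 2 by rewrite ssN; exact: ltW.
  have hb := @bnd R d y (fun i => - c i) e r
     (fun i => coord_abs i (ltW he) (ltW hy0))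
     (fun i => coord_abs i (ltW rpos) hc).
  have hb' := ler_norm (\sum_(i < d) y i * - c i).
  have hee : e ^+ 2 <= e by nra.
  have : D * (e * r) * 2 + e <= r ^+ 2 - S by lra.
  rewrite -/S in hy; lra.
have hS : S = r ^+ 2 by apply/eqP; rewrite eq_le hS1 hS2.
have [i0 hi0] : exists i0 : 'I_d, forall i, `|c i| <= `|c i0|.
  case: (@arg_maxP _ R _ (Ordinal hd) xpredT (fun i => `|c i|) erefl) => j _ H.
  by exists j => i; apply: H.
pose m := `|c i0|.
have hm : S <= D * m ^+ 2.
  apply: (@le_trans _ _ (\sum_(i < d) m ^+ 2)).
    apply: ler_sum => i _; rewrite -(real_normK (num_real (c i))).
    have := hi0 i; have := normr_ge0 (c i); rewrite /m; nra.
  by rewrite sumr_const card_ord mulr_natl.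
have m0 : 0 <= m by rewrite normr_ge0.
have hm3 : 3 * l * D <= m.
  have h1 : (3 * l * D ^+ 2) ^+ 2 <= r ^+ 2.
    have : 0 <= 3 * l * D ^+ 2 by apply: mulr_ge0; [lra | rewrite sqr_ge0].
    nra.
  have h2 : 9 * l ^+ 2 * D ^+ 3 <= m ^+ 2.
    have : D * (9 * l ^+ 2 * D ^+ 3) <= D * m ^+ 2 by rewrite -hS in h1; nra.
    rewrite ler_pM2l //; lra.
  have h3 : 9 * l ^+ 2 * D ^+ 2 <= 9 * l ^+ 2 * D ^+ 3.
    have : 0 <= l ^+ 2 * D ^+ 2 by rewrite mulr_ge0 // sqr_ge0.
    nra.
  rewrite leNgt; apply/negP => hlt.
  have : 0 <= 3 * l * D by apply: mulr_ge0; lra.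
  nra.
pose z := fun i : 'I_d => if i == i0 then (if 0 <= c i0 then d%:Z else - d%:Z) else 0%Z.
exists z; split.
  rewrite /Iset /supnormZ; apply/eqP; rewrite eqn_leq; apply/andP; split.
    apply/bigmax_leqP => i _; rewrite /z; case: (i == i0) => //.
    by case: ifP => _; rewrite ?abszN absz_nat.
  apply: (leq_trans _ (leq_bigmax i0)).
  by rewrite /z eqxx; case: ifP => _; rewrite ?abszN absz_nat.
move=> x hx.
have hoff : forall i, i != i0 -> `|x i| <= l / 2.
  move=> i hi; have := hx i; by rewrite /z (negbTE hi) mulr0z mul0r subr0.
have [hx0c hx02] : (D * l - l / 2) * m <= x i0 * c i0 /\ x i0 ^+ 2 <= (D * l + l / 2) ^+ 2.
  have := hx i0; rewrite /z eqxx /m.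
  case: (lerP 0 (c i0)) => hc.
    rewrite -pmulrn -/D (ger0_norm hc) ler_norml => /andP[h1 h2].
    have hDl : l <= D * l by nra.
    have hp : 0 <= (x i0 - D * l + l / 2) * c i0 by apply: mulr_ge0; lra.
    split; first by lra.
    have : 0 <= x i0 by lra.
    have : x i0 <= D * l + l / 2 by lra.
    nra.
  rewrite intrN -pmulrn -/D (ltr0_norm hc) ler_norml => /andP[h1 h2].
  have hDl : l <= D * l by nra.
  have hp : 0 <= (- x i0 - D * l + l / 2) * - c i0 by apply: mulr_ge0; lra.
  split; first by lra.
  have : x i0 <= 0 by lra.
  have : - (D * l + l / 2) <= x i0 by lra.
  nra.
have hA : `|\sum_(i < d | i != i0) x i * c i| <= l / 2 * (D * m - m).
  apply: le_trans (ler_norm_sum _ _ _) _.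
  apply: (@le_trans _ _ (\sum_(i < d | i != i0) l / 2 * `|c i|)).
    apply: ler_sum => i hi; rewrite normrM.
    by apply: ler_wpM2r; rewrite ?normr_ge0 ?hoff.
  rewrite -mulr_sumr; apply: ler_wpM2l; first lra.
  have E : \sum_(i < d) `|c i| = m + \sum_(i < d | i != i0) `|c i| by rewrite (bigD1 i0).
  have : \sum_(i < d) `|c i| <= D * m.
    apply: (@le_trans _ _ (\sum_(i < d) m)); first by apply: ler_sum => i _; exact: hi0.
    by rewrite sumr_const card_ord mulr_natl.
  lra.
have hB : \sum_(i < d | i != i0) x i ^+ 2 <= D * (l / 2) ^+ 2 - (l / 2) ^+ 2.
  apply: (@le_trans _ _ (\sum_(i < d | i != i0) (l / 2) ^+ 2)).
    apply: ler_sum => i hi; have := hoff i hi; have := normr_ge0 (x i).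
    rewrite -(real_normK (num_real (x i))); nra.
  have E : \sum_(i < d) (l / 2) ^+ 2 = (l / 2) ^+ 2 + \sum_(i < d | i != i0) (l / 2) ^+ 2.
    by rewrite (bigD1 i0).
  have E2 : \sum_(i < d) (l / 2) ^+ 2 = D * (l / 2) ^+ 2.
    by rewrite sumr_const card_ord mulr_natl.
  lra.
have hT : ss (fun i => x i - c i) = x i0 ^+ 2 + \sum_(i < d | i != i0) x i ^+ 2
    - 2 * (x i0 * c i0 + \sum_(i < d | i != i0) x i * c i) + S.
  rewrite (ssD x (fun i => - c i)) ssN -/S.
  have -> : \sum_(i < d) x i * - c i = - \sum_(i < d) x i * c i.
    by rewrite -sumrN; apply: eq_bigr => i _; rewrite mulrN.
  by rewrite /ss (bigD1 i0) //= (bigD1 i0 (F := fun i => x i * c i)) //=; ring.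
have hdel : ss (fun i => x i - c i) <= r ^+ 2 - l ^+ 2 / 2.
  rewrite hT hS.
  have hDm : 3 * D ^+ 2 * l ^+ 2 <= D * l * m.
    have : 0 <= D * l by apply: mulr_ge0; lra.
    nra.
  have hA' := ler_norm (\sum_(i < d | i != i0) x i * c i).
  have hA'' : - (l / 2 * (D * m - m)) <= \sum_(i < d | i != i0) x i * c i.
    by move: hA; rewrite ler_norml => /andP[].
  nra.
set T := ss (fun i => x i - c i) in hdel.
have hl2 : 0 < l ^+ 2 / 2 by apply: divr_gt0; [rewrite exprn_gt0 | ]; lra.
have [e he [he1 heK]] := @small_eps R (r ^+ 2 - T) (2 * D * r) (ltac:(lra)) (ltac:(nra)).
exists e => // y hy.
rewrite /cball (edist_le _ _ (ltW rpos)).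
move: hy; rewrite edist_lt // => hy.
have E : ss (fun i => y i - c i) = ss (fun i => (y i - x i) + (x i - c i)).
  by apply: eq_bigr => i _; rewrite subrKA.
rewrite E ssD -/T.
have hTr : T <= r ^+ 2 by lra.
have hb := @bnd R d (fun i => y i - x i) (fun i => x i - c i) e r
   (fun i => coord_abs i (ltW he) (ltW hy)) (fun i => coord_abs i (ltW rpos) hTr).
have hb' := ler_norm (\sum_(i < d) (y i - x i) * (x i - c i)).
have hee : e ^+ 2 <= e by nra.
have : D * (e * r) * 2 + e <= r ^+ 2 - T by lra.
lra.
Qed.
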